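(* Let $H:\mathbb{D}\times\mathbb{D}\to\Omega_1$, $H(z,w)=\left(\frac{z-w}{1-zw},\,-i\frac{z+w}{1-zw}\right)$ (a biholomorphism), let $F:\mathbb{G}\to\mathcal{D}_1$, $F(s,p)=\left(i\frac{1+p}{1-p},\,-i\frac{s}{1-p}\right)$ (a biholomorphism), and let $sym:\mathbb{D}\times\mathbb{D}\to\mathbb{G}$, $sym(z_1,z_2)=(z_1+z_2,z_1z_2)$. Then there is a proper holomorphic map $sym_{\Omega_1}:\Omega_1\to\mathcal{D}_1$ such that $sym_{\Omega_1}\circ H=F\circ sym$ on $\mathbb{D}\times\mathbb{D}$.
   Context: $\mathbb{D}$ is the open unit disc in $\mathbb{C}$. $\mathbb{G}=\{(z_1+z_2,z_1z_2):z_1,z_2\in\mathbb{D}\}$. $\Omega_1=\{(u,v)\in\mathbb{C}^2: |u^2|+|v^2|-1<|u^2+v^2-1|\}$. $\mathcal{D}_1=\{(z_1,z_2)\in\mathbb{C}^2: 1+|z_1|^2-|z_2|^2>|1+z_1^2-z_2^2|,\ \mathrm{Im}(z_1(1+\overline{z_2}))>0\}$. *)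

(* Defs.v *)
From Stdlib Require Import Reals.
From Coquelicot Require Import Coquelicot.
Open Scope R_scope.

Definition C2 := (C * C)%type.
Definition n2 (x : C2) : R := Rmax (Cmod (fst x)) (Cmod (snd x)).
Definition add2 (x y : C2) : C2 := (Cplus (fst x) (fst y), Cplus (snd x) (snd y)).
Definition sub2 (x y : C2) : C2 := (Cminus (fst x) (fst y), Cminus (snd x) (snd y)).

Definition Disc (z : C) : Prop := Cmod z < 1.

Definition Gsym (x : C2) : Prop :=
  exists z1 z2 : C, Disc z1 /\ Disc z2 /\ x = (Cplus z1 z2, Cmult z1 z2).

Definition Omega1 (x : C2) : Prop :=
  let u := fst x in let v := snd x in
  Cmod (Cmult u u) + Cmod (Cmult v v) - 1
    < Cmod (Cminus (Cplus (Cmult u u) (Cmult v v)) (RtoC 1)).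

Definition D1 (x : C2) : Prop :=
  let z1 := fst x in let z2 := snd x in
  Cmod (Cminus (Cplus (RtoC 1) (Cmult z1 z1)) (Cmult z2 z2))
    < 1 + Cmod z1 ^ 2 - Cmod z2 ^ 2
  /\ 0 < Im (Cmult z1 (Cconj (Cplus (RtoC 1) z2))).

Definition Hmap (x : C2) : C2 :=
  let z := fst x in let w := snd x in
  (Cdiv (Cminus z w) (Cminus (RtoC 1) (Cmult z w)),
   Cmult (Copp Ci) (Cdiv (Cplus z w) (Cminus (RtoC 1) (Cmult z w)))).

Definition Fmap (x : C2) : C2 :=
  let s := fst x in let p := snd x in
  (Cmult Ci (Cdiv (Cplus (RtoC 1) p) (Cminus (RtoC 1) p)),
   Cmult (Copp Ci) (Cdiv s (Cminus (RtoC 1) p))).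

Definition symm (x : C2) : C2 := (Cplus (fst x) (snd x), Cmult (fst x) (snd x)).

Definition C_differentiable_at (f : C2 -> C2) (x : C2) : Prop :=
  exists a b c d : C,
    forall eps : R, 0 < eps -> exists delta : R, 0 < delta /\
      forall h : C2, n2 h < delta ->
        n2 (sub2 (sub2 (f (add2 x h)) (f x))
                 (Cplus (Cmult a (fst h)) (Cmult b (snd h)),
                  Cplus (Cmult c (fst h)) (Cmult d (snd h))))
          <= eps * n2 h.

Definition holomorphic_on (U : C2 -> Prop) (f : C2 -> C2) : Prop :=
  forall x, U x -> C_differentiable_at f x.

(* Compactness in C^2 (a metric space): sequential compactness. *)
Definition seq_cvg (u : nat -> C2) (l : C2) : Prop :=
  forall eps : R, 0 < eps -> exists N : nat, forall n, (N <= n)%nat -> n2 (sub2 (u n) l) < eps.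

Definition compact2 (K : C2 -> Prop) : Prop :=
  forall u : nat -> C2, (forall n, K (u n)) ->
    exists (phi : nat -> nat) (l : C2),
      (forall n, (phi n < phi (S n))%nat) /\ K l /\ seq_cvg (fun n => u (phi n)) l.

Definition proper_map (U V : C2 -> Prop) (f : C2 -> C2) : Prop :=
  (forall x, U x -> V (f x)) /\
  forall K : C2 -> Prop, compact2 K -> (forall y, K y -> V y) ->
    compact2 (fun x => U x /\ K (f x)).

(* Main.v *)
Require Import Defs.
From Stdlib Require Import Reals Lra Lia Psatz ClassicalEpsilon.
From Coquelicot Require Import Coquelicot.
Open Scope R_scope.
Fixpoint extr (f : nat -> nat -> nat) (n : nat) : nat :=
  match n with O => f O O | S m => f (S (extr f m)) (S m) end.

Lemma lim_of_spec (u : nat -> R) (l : R) :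
  (forall eps, 0 < eps -> exists N, forall n, (N <= n)%nat -> Rabs (u n - l) < eps) ->
  is_lim_seq u l.
Proof.
  intros H. apply is_lim_seq_spec. intros eps. destruct (H eps (cond_pos eps)) as [N HN].
  exists N. exact HN.
Qed.

Lemma spec_of_lim (u : nat -> R) (l : R) : is_lim_seq u l ->
  forall eps, 0 < eps -> exists N, forall n, (N <= n)%nat -> Rabs (u n - l) < eps.
Proof.
  intros H eps He. apply is_lim_seq_spec in H. destruct (H (mkposreal eps He)) as [N HN].
  exists N. exact HN.
Qed.

Lemma bw (s : nat -> R) (B : R) : (forall n, Rabs (s n) <= B) ->
  exists (phi : nat -> nat) (l : R), (forall n, (phi n < phi (S n))%nat) /\ is_lim_seq (fun n => s (phi n)) l.
Proof.
  intros HB.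
  destruct (Bolzano_Weierstrass s (fun c => -B <= c <= B) (compact_P3 (-B) B)) as [l Hl].
  { intros n. specialize (HB n). apply Rabs_le_between in HB. lra. }
  assert (H : forall N k : nat, exists p, (N <= p)%nat /\ Rabs (s p - l) < / (INR k + 1)).
  { intros N k. assert (Hk : 0 < / (INR k + 1)) by (apply Rinv_0_lt_compat; pose proof (pos_INR k); lra).
    destruct (Hl (fun y => Rabs (y - l) < / (INR k + 1)) N) as [p Hp].
    { exists (mkposreal _ Hk). intros y Hy. exact Hy. }
    exists p. exact Hp. }
  set (f := fun N k => proj1_sig (constructive_indefinite_description _ (H N k))).
  assert (Hf : forall N k, (N <= f N k)%nat /\ Rabs (s (f N k) - l) < / (INR k + 1)).
  { intros N k. unfold f. destruct (constructive_indefinite_description _ (H N k)) as [p Hp]. exact Hp. }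
  exists (extr f), l. split.
  - intros n. simpl. destruct (Hf (S (extr f n)) (S n)). lia.
  - apply lim_of_spec. intros eps He.
    destruct (archimed (/ eps)) as [Ha _].
    destruct (INR_unbounded (/ eps)) as [k Hk].
    exists k. intros n Hn.
    assert (Hen : Rabs (s (extr f n) - l) < / (INR n + 1)).
    { destruct n; simpl; apply Hf. }
    eapply Rlt_trans. exact Hen.
    assert (INR k <= INR n) by (apply le_INR; exact Hn).
    assert (/ eps < INR n + 1) by lra.
    apply Rlt_le_trans with (/ / eps).
    + apply Rinv_lt_contravar. apply Rmult_lt_0_compat. apply Rinv_0_lt_compat; lra. pose proof (pos_INR n); lra. exact H1.
    + rewrite Rinv_inv. lra.
Qed.

Lemma incr_mono (f : nat -> nat) : (forall n, (f n < f (S n))%nat) -> forall n m, (n < m)%nat -> (f n < f m)%nat.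
Proof.
  intros H n m Hnm. induction Hnm. apply H. specialize (H m). lia.
Qed.

Lemma incr_comp (f g : nat -> nat) : (forall n, (f n < f (S n))%nat) -> (forall n, (g n < g (S n))%nat) ->
  forall n, (f (g n) < f (g (S n)))%nat.
Proof. intros Hf Hg n. apply incr_mono; auto. Qed.

Lemma lim_sub (u : nat -> R) (l : R) (phi : nat -> nat) : (forall n, (phi n < phi (S n))%nat) ->
  is_lim_seq u l -> is_lim_seq (fun n => u (phi n)) l.
Proof. intros H Hl. apply is_lim_seq_subseq; auto. apply eventually_subseq; auto. Qed.

Lemma lim_uniq (u v : nat -> R) (l1 l2 : R) : (forall n, u n = v n) -> is_lim_seq u l1 -> is_lim_seq v l2 -> l1 = l2.
Proof.
  intros E H1 H2. apply (is_lim_seq_ext _ _ _ E) in H1.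
  apply is_lim_seq_unique in H1. apply is_lim_seq_unique in H2. rewrite H1 in H2. injection H2. auto.
Qed.

Lemma cvg_comp (u : nat -> C2) (l : C2) : seq_cvg u l ->
  is_lim_seq (fun n => fst (fst (u n))) (fst (fst l)) /\
  is_lim_seq (fun n => snd (fst (u n))) (snd (fst l)) /\
  is_lim_seq (fun n => fst (snd (u n))) (fst (snd l)) /\
  is_lim_seq (fun n => snd (snd (u n))) (snd (snd l)).
Proof.
  intros H.
  assert (K : forall (pr : C2 -> R), (forall z : C2, Rabs (pr z) <= n2 z) ->
             (forall z w, pr (sub2 z w) = pr z - pr w) ->
             is_lim_seq (fun n => pr (u n)) (pr l)).
  { intros pr Hpr Hsub. apply lim_of_spec. intros eps He. destruct (H eps He) as [N HN].
    exists N. intros n Hn. rewrite <- Hsub. eapply Rle_lt_trans. apply Hpr. apply HN; auto. }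
  repeat split.
  - apply (K (fun z => fst (fst z))).
    + intros z. eapply Rle_trans. apply re_le_Cmod. unfold n2. apply Rmax_l.
    + intros [[a b] [c d]] [[a' b'] [c' d']]. simpl. ring.
  - apply (K (fun z => snd (fst z))).
    + intros z. eapply Rle_trans. 2: (unfold n2; apply Rmax_l).
      pose proof (Rmax_Cmod (fst z)). pose proof (Rmax_r (Rabs (fst (fst z))) (Rabs (snd (fst z)))). lra.
    + intros [[a b] [c d]] [[a' b'] [c' d']]. simpl. ring.
  - apply (K (fun z => fst (snd z))).
    + intros z. eapply Rle_trans. apply re_le_Cmod. unfold n2. apply Rmax_r.
    + intros [[a b] [c d]] [[a' b'] [c' d']]. simpl. ring.
  - apply (K (fun z => snd (snd z))).
    + intros z. eapply Rle_trans. 2: (unfold n2; apply Rmax_r).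
      pose proof (Rmax_Cmod (snd z)). pose proof (Rmax_r (Rabs (fst (snd z))) (Rabs (snd (snd z)))). lra.
    + intros [[a b] [c d]] [[a' b'] [c' d']]. simpl. ring.
Qed.

Lemma Cmod_le2 (z : C) (e : R) : Rabs (fst z) < e -> Rabs (snd z) < e -> Cmod z < 2 * e.
Proof.
  intros H1 H2. eapply Rle_lt_trans. apply Cmod_2Rmax.
  assert (sqrt 2 < 2).
  { rewrite <- (sqrt_pow2 2) at 2 by lra. apply sqrt_lt_1; lra. }
  assert (Rmax (Rabs (fst z)) (Rabs (snd z)) < e) by (apply Rmax_lub_lt; auto).
  pose proof (Rmax_l (Rabs (fst z)) (Rabs (snd z))). pose proof (Rabs_pos (fst z)).
  pose proof (sqrt_pos 2). nra.
Qed.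

Lemma comp_cvg (u : nat -> C2) (l : C2) :
  is_lim_seq (fun n => fst (fst (u n))) (fst (fst l)) ->
  is_lim_seq (fun n => snd (fst (u n))) (snd (fst l)) ->
  is_lim_seq (fun n => fst (snd (u n))) (fst (snd l)) ->
  is_lim_seq (fun n => snd (snd (u n))) (snd (snd l)) -> seq_cvg u l.
Proof.
  intros H1 H2 H3 H4 eps He.
  assert (He2 : 0 < eps / 2) by lra.
  destruct (spec_of_lim _ _ H1 _ He2) as [N1 P1].
  destruct (spec_of_lim _ _ H2 _ He2) as [N2 P2].
  destruct (spec_of_lim _ _ H3 _ He2) as [N3 P3].
  destruct (spec_of_lim _ _ H4 _ He2) as [N4 P4].
  exists (N1 + N2 + N3 + N4)%nat. intros n Hn.
  unfold n2, sub2. apply Rmax_lub_lt.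
  - replace eps with (2 * (eps / 2)) by field. apply Cmod_le2; simpl.
    + apply P1; lia.
    + apply P2; lia.
  - replace eps with (2 * (eps / 2)) by field. apply Cmod_le2; simpl.
    + apply P3; lia.
    + apply P4; lia.
Qed.

Definition csqrt (q : C) : C :=
  let r := sqrt ((Cmod q + fst q) / 2) in (r, snd q / (2 * r)).

Lemma Cmod_sq (q : C) : Cmod q * Cmod q = fst q * fst q + snd q * snd q.
Proof. unfold Cmod. rewrite sqrt_sqrt; [simpl; ring | simpl; nra]. Qed.

Lemma Cmod_ge_fst (q : C) : Rabs (fst q) <= Cmod q.
Proof. apply re_le_Cmod. Qed.
Lemma Cmod_ge_snd (q : C) : Rabs (snd q) <= Cmod q.
Proof. pose proof (Rmax_Cmod q). pose proof (Rmax_r (Rabs (fst q)) (Rabs (snd q))). lra. Qed.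

Lemma csqrt_re_ge0 q : 0 <= fst (csqrt q).
Proof. unfold csqrt; simpl. apply sqrt_pos. Qed.

Lemma csqrt_re_pos q : 0 < Cmod q + fst q -> 0 < fst (csqrt q).
Proof. intros H. unfold csqrt; simpl. apply sqrt_lt_R0. lra. Qed.

Lemma csqrt_sq q : 0 < Cmod q + fst q -> Cmult (csqrt q) (csqrt q) = q.
Proof.
  intros H. destruct q as [x y]. unfold csqrt. simpl fst in *; simpl snd in *.
  set (m := Cmod (x, y)) in *.
  assert (Hm : m * m = x * x + y * y) by (apply (Cmod_sq (x,y))).
  set (r := sqrt ((m + x) / 2)).
  assert (Hr : r * r = (m + x) / 2) by (unfold r; rewrite sqrt_sqrt; lra).
  assert (Hr0 : 0 < r) by (apply sqrt_lt_R0; lra).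
  unfold Cmult; simpl. apply injective_projections; simpl.
  - replace (y / (2 * r) * (y / (2 * r))) with (y * y / (4 * (r * r))) by (field; lra).
    rewrite Hr. apply Rmult_eq_reg_r with (r := (m + x)). 2: lra.
    field_simplify; [|lra]. nra.
  - field. lra.
Qed.

Lemma csqrt_unique q G : Cmult G G = q -> 0 < fst G -> csqrt q = G.
Proof.
  intros HG Hpos.
  assert (Hq : 0 < Cmod q + fst q).
  { destruct G as [a b]. subst q. unfold Cmult; simpl in *.
    pose proof (Cmod_ge_fst (a*a - b*b, a*b+b*a)). simpl in H.
    assert (Cmod (a * a - b * b, a * b + b * a) * Cmod (a * a - b * b, a * b + b * a) = (a*a+b*b)*(a*a+b*b)).
    { rewrite Cmod_sq. simpl. ring. }
    assert (Cmod (a * a - b * b, a * b + b * a) = a*a+b*b).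
    { unfold Cmod. rewrite <- (sqrt_pow2 (a*a+b*b)) by nra. f_equal. simpl. ring. }
    rewrite H1. nra. }
  pose proof (csqrt_sq q Hq) as Hs. pose proof (csqrt_re_pos q Hq) as Hp.
  set (c := csqrt q) in *.
  assert (E : Cmult (Cminus c G) (Cplus c G) = 0).
  { transitivity (Cminus (Cmult c c) (Cmult G G)). ring. rewrite Hs, HG. ring. }
  assert (NZ : Cplus c G <> 0).
  { intro Z. assert (fst (Cplus c G) = 0) by (rewrite Z; reflexivity). unfold Cplus in H; cbn [fst] in H. lra. }
  assert (Cminus c G = 0).
  { transitivity (Cmult (Cmult (Cminus c G) (Cplus c G)) (Cinv (Cplus c G))).
    field. exact NZ. rewrite E. ring. }
  transitivity (Cplus (Cminus c G) G). ring. rewrite H. ring.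
Qed.

Definition Qf (x : C2) : C :=
  Cminus (RtoC 1) (Cplus (Cmult (fst x) (fst x)) (Cmult (snd x) (snd x))).
Definition symO (x : C2) : C2 := (Cmult Ci (csqrt (Qf x)), snd x).

Lemma Omega1_Q x : Omega1 x -> 0 < Cmod (Qf x) + fst (Qf x).
Proof.
  destruct x as [u v]. unfold Omega1, Qf. cbn [fst snd]. intros H.
  set (a := Cmult u u) in *. set (b := Cmult v v) in *.
  assert (E1 : Cmod (Cminus (Cplus a b) (RtoC 1)) = Cmod (Cminus (RtoC 1) (Cplus a b))).
  { rewrite <- Cmod_opp. f_equal. ring. }
  rewrite E1 in H.
  set (Q := Cminus (RtoC 1) (Cplus a b)) in *.
  assert (Hab : Cplus a b = Cminus (RtoC 1) Q) by (unfold Q; ring).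
  pose proof (Cmod_triangle a b) as T. rewrite Hab in T.
  pose proof (Cmod_ge_fst (Cminus (RtoC 1) Q)) as F.
  assert (fst (Cminus (RtoC 1) Q) = 1 - fst Q) by (unfold Cminus, Cplus, Copp, RtoC; simpl; ring).
  rewrite H0 in F.
  pose proof (Cmod_ge_fst Q).
  apply Rnot_le_lt. intro HH.
  assert (Rabs (1 - fst Q) = 1 - fst Q).
  { apply Rabs_right. apply Rabs_le_between' in H1 || idtac.  
    pose proof (Rle_abs (- fst Q)). rewrite Rabs_Ropp in H2. lra. }
  pose proof (Rle_abs (- fst Q)). rewrite Rabs_Ropp in H3. lra.
Qed.

Lemma key_ineq (z1 z2 : C) :
  Cmod (Cminus (Cplus (RtoC 1) (Cmult z1 z1)) (Cmult z2 z2)) < 1 + Cmod z1 ^ 2 - Cmod z2 ^ 2 ->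
  (snd z1) * (snd z1) - (snd z2) * (snd z2)
    - (snd z1 * fst z2 - fst z1 * snd z2) * (snd z1 * fst z2 - fst z1 * snd z2) > 0.
Proof.
  intros H. rewrite !Cmod2_alt in H.
  set (W := Cminus (Cplus (RtoC 1) (Cmult z1 z1)) (Cmult z2 z2)) in *.
  pose proof (Cmod_ge_0 W). pose proof (Cmod_sq W).
  destruct z1 as [p q]; destruct z2 as [c d].
  assert (F1 : fst W = 1 + (p * p - q * q) - (c * c - d * d)) by (unfold W; simpl; ring).
  assert (F2 : snd W = (p * q + q * p) - (c * d + d * c)) by (unfold W; simpl; ring).
  rewrite F1, F2 in H1. unfold Re, Im in H. cbn [fst snd] in *.
  set (A := 1 + (p ^ 2 + q ^ 2) - (c ^ 2 + d ^ 2)) in *.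
  assert (H2 : Cmod W * Cmod W < A * A) by (apply Rmult_le_0_lt_compat; lra).
  rewrite H1 in H2. unfold A in H2. nra.
Qed.

Lemma D1_second (z1 z2 : C) :
  Im (Cmult z1 (Cconj (Cplus (RtoC 1) z2))) =
  snd z1 + (snd z1 * fst z2 - fst z1 * snd z2).
Proof. destruct z1, z2; unfold Im, Cmult, Cconj, Cplus, RtoC; simpl; ring. Qed.

Lemma D1_im y : D1 y -> 0 < snd (fst y).
Proof.
  destruct y as [z1 z2]. unfold D1. cbn [fst snd]. intros [H1 H2].
  apply key_ineq in H1. rewrite D1_second in H2. nra.
Qed.

Lemma Omega1_eqv x G : Cmult G G = Qf x ->
  (Omega1 x <->
   Cmod (Cminus (Cplus (RtoC 1) (Cmult (Cmult Ci G) (Cmult Ci G))) (Cmult (snd x) (snd x)))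
     < 1 + Cmod (Cmult Ci G) ^ 2 - Cmod (snd x) ^ 2).
Proof.
  destruct x as [u v]. unfold Omega1, Qf. cbn [fst snd]. intros HG.
  assert (E1 : Cminus (Cplus (RtoC 1) (Cmult (Cmult Ci G) (Cmult Ci G))) (Cmult v v) = Cmult u u).
  { transitivity (Cminus (Cplus (RtoC 1) (Cmult (Cmult Ci Ci) (Cmult G G))) (Cmult v v)). ring.
    rewrite HG. assert (Cmult Ci Ci = Copp (RtoC 1)) by (unfold Ci, Cmult, Copp, RtoC; simpl; f_equal; ring).
    rewrite H. ring. }
  assert (E2 : Cmod (Cmult Ci G) ^ 2 = Cmod (Cminus (Cplus (Cmult u u) (Cmult v v)) (RtoC 1))).
  { rewrite Cmod_mult, Cmod_Ci. rewrite <- (Cmod_opp (Cminus (Cplus (Cmult u u) (Cmult v v)) (RtoC 1))).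
    replace (Copp (Cminus (Cplus (Cmult u u) (Cmult v v)) (RtoC 1))) with (Cmult G G) by (rewrite HG; ring).
    rewrite Cmod_mult. ring. }
  assert (E3 : Cmod v ^ 2 = Cmod (Cmult v v)) by (rewrite Cmod_mult; ring).
  rewrite E1, E2, E3. lra.
Qed.

Lemma csqrt_Q x : Omega1 x -> Cmult (csqrt (Qf x)) (csqrt (Qf x)) = Qf x.
Proof. intros H. apply csqrt_sq, Omega1_Q, H. Qed.

Lemma symO_D1 x : Omega1 x -> D1 (symO x).
Proof.
  intros H. pose proof (csqrt_Q x H) as HG.
  pose proof (csqrt_re_pos _ (Omega1_Q x H)) as Hp.
  unfold D1, symO. cbn [fst snd]. split.
  - apply (Omega1_eqv x _ HG). exact H.
  - pose proof (proj1 (Omega1_eqv x _ HG) H) as H1.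
    apply key_ineq in H1. rewrite D1_second.
    set (g := csqrt (Qf x)) in *. destruct g as [a b]. destruct (snd x) as [c d].
    unfold Ci, Cmult in *. cbn [fst snd] in *. nra.
Qed.

Lemma CiCi : Cmult Ci Ci = Copp (RtoC 1).
Proof. unfold Ci, Cmult, Copp, RtoC; simpl; f_equal; ring. Qed.

Lemma eq_part z w : Disc z -> Disc w -> symO (Hmap (z, w)) = Fmap (symm (z, w)).
Proof.
  unfold Disc. intros Hz Hw.
  set (p := Cmult z w).
  assert (Hp : Cmod p < 1).
  { unfold p. rewrite Cmod_mult. pose proof (Cmod_ge_0 z). pose proof (Cmod_ge_0 w). nra. }
  assert (HD : Cminus (RtoC 1) p <> RtoC 0).
  { intro E. assert (p = RtoC 1). { transitivity (Cplus (Copp (Cminus (RtoC 1) p)) (RtoC 1)). ring. rewrite E. ring. }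
    rewrite H, Cmod_1 in Hp. lra. }
  unfold symO, Hmap, Fmap, symm. cbn [fst snd]. fold p.
  f_equal. f_equal.
  apply csqrt_unique.
  - unfold Qf. cbn [fst snd].
    set (D := Cminus (RtoC 1) p) in *.
    replace (Cmult (Cmult (Copp Ci) (Cdiv (Cplus z w) D)) (Cmult (Copp Ci) (Cdiv (Cplus z w) D)))
      with (Cmult (Cmult Ci Ci) (Cmult (Cdiv (Cplus z w) D) (Cdiv (Cplus z w) D))) by ring.
    rewrite CiCi. unfold D, p. field. exact HD.
  - destruct p as [x y]. 
    assert (Hxy : x * x + y * y < 1).
    { pose proof (Cmod_sq (x, y)). pose proof (Cmod_ge_0 (x,y)). simpl in H. nra. }
    assert (Hd : (1 - x) * (1 - x) + y * y > 0) by nra.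
    unfold Cdiv, Cmult, Cinv, Cplus, Cminus, Copp, RtoC. cbn [fst snd].
    match goal with |- 0 < ?e => replace e
      with ((1 - x * x - y * y) / ((1 - x) * (1 - x) + y * y)) by (simpl; field; nra) end.
    apply Rdiv_lt_0_compat; lra.
Qed.

Lemma n2_fst h : Cmod (fst h) <= n2 h.
Proof. unfold n2. apply Rmax_l. Qed.
Lemma n2_snd h : Cmod (snd h) <= n2 h.
Proof. unfold n2. apply Rmax_r. Qed.

Lemma Cmod_add_le a b x y : Cmod a <= x -> Cmod b <= y -> Cmod (Cplus a b) <= x + y.
Proof. intros. pose proof (Cmod_triangle a b). lra. Qed.

Lemma Cmod_mul_le a b x y : Cmod a <= x -> Cmod b <= y -> Cmod (Cmult a b) <= x * y.
Proof. intros. rewrite Cmod_mult. apply Rmult_le_compat; auto using Cmod_ge_0. Qed.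

Lemma Cmod_fst_le z : fst z <= Cmod z.
Proof. pose proof (Cmod_ge_fst z). pose proof (Rle_abs (fst z)). lra. Qed.

Lemma holo : holomorphic_on Omega1 symO.
Proof.
  intros [u v] Hx.
  pose proof (csqrt_Q _ Hx) as Hg. pose proof (Omega1_Q _ Hx) as Hb.
  pose proof (csqrt_re_pos _ Hb) as Ha.
  set (Q := Qf (u, v)) in *. set (g := csqrt Q) in *.
  set (al := fst g) in *. set (be := Cmod Q + fst Q) in *.
  assert (Hg0 : g <> RtoC 0).
  { intro E. unfold al in Ha. rewrite E in Ha. simpl in Ha. lra. }
  assert (Hgal : al <= Cmod g) by apply Cmod_fst_le.
  exists (Cmult Ci (Copp (Cdiv u g))), (Cmult Ci (Copp (Cdiv v g))), (RtoC 0), (RtoC 1).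
  intros eps Heps.
  set (M := 2 * Cmod u + 2 * Cmod v + 2).
  assert (HM : 0 < M) by (unfold M; pose proof (Cmod_ge_0 u); pose proof (Cmod_ge_0 v); lra).
  set (K := ((Cmod u + Cmod v) * M / al + 2 * Cmod g) / (al * al)).
  assert (HK : 0 < K).
  { unfold K. apply Rdiv_lt_0_compat; [|nra].
    pose proof (Cmod_ge_0 u); pose proof (Cmod_ge_0 v).
    assert (0 <= (Cmod u + Cmod v) * M / al) by (apply Rdiv_le_0_compat; nra). lra. }
  exists (Rmin 1 (Rmin (be / (2 * M)) (eps / K))).
  split.
  { apply Rmin_pos; [lra | apply Rmin_pos; apply Rdiv_lt_0_compat; lra]. }
  intros [h1 h2] Hn.
  set (n := n2 (h1, h2)) in *.
  assert (Hn1 : Cmod h1 <= n) by apply (n2_fst (h1, h2)).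
  assert (Hn2 : Cmod h2 <= n) by apply (n2_snd (h1, h2)).
  assert (Hn0 : 0 <= n) by (pose proof (Cmod_ge_0 h1); lra).
  assert (Hnl1 : n < 1) by (pose proof (Rmin_l 1 (Rmin (be / (2 * M)) (eps / K))); lra).
  assert (HnM : n < be / (2 * M))
    by (pose proof (Rmin_r 1 (Rmin (be / (2 * M)) (eps / K))); pose proof (Rmin_l (be / (2 * M)) (eps / K)); lra).
  assert (HnK : n < eps / K)
    by (pose proof (Rmin_r 1 (Rmin (be / (2 * M)) (eps / K))); pose proof (Rmin_r (be / (2 * M)) (eps / K)); lra).
  set (Q' := Qf (Cplus u h1, Cplus v h2)).
  assert (HdQ : Cminus Q' Q = Copp (Cplus (Cplus (Cmult u h1) (Cmult u h1)) (Cplus (Cmult h1 h1)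
                 (Cplus (Cplus (Cmult v h2) (Cmult v h2)) (Cmult h2 h2)))))
    by (unfold Q', Q, Qf; cbn [fst snd]; ring).
  assert (HdQb : Cmod (Cminus Q' Q) <= M * n).
  { rewrite HdQ, Cmod_opp.
    assert (Cmod (Cplus (Cplus (Cmult u h1) (Cmult u h1)) (Cplus (Cmult h1 h1)
                 (Cplus (Cplus (Cmult v h2) (Cmult v h2)) (Cmult h2 h2))))
            <= (Cmod u * n + Cmod u * n) + (n * n + ((Cmod v * n + Cmod v * n) + n * n))).
    { repeat apply Cmod_add_le; apply Cmod_mul_le; auto; lra. }
    unfold M. nra. }
  assert (Hb' : 0 < Cmod Q' + fst Q').
  { pose proof (Cmod_triangle (Cminus Q' Q) Q).
    replace (Cplus (Cminus Q' Q) Q) with Q' in H by ring.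
    pose proof (Cmod_fst_le (Copp (Cminus Q' Q))). rewrite Cmod_opp in H0.
    assert (fst (Copp (Cminus Q' Q)) = fst Q - fst Q') by (simpl; ring).
    rewrite H1 in H0.
    assert (M * n < be / 2).
    { apply Rmult_lt_reg_l with (r := / M). apply Rinv_0_lt_compat; lra.
      replace (/ M * (M * n)) with n by (field; lra).
      replace (/ M * (be / 2)) with (be / (2 * M)) by (field; lra). lra. }
    assert (Cmod Q <= Cmod Q' + Cmod (Cminus Q' Q)).
    { pose proof (Cmod_triangle Q' (Copp (Cminus Q' Q))). rewrite Cmod_opp in H3.
      replace (Cplus Q' (Copp (Cminus Q' Q))) with Q in H3 by ring. lra. }
    unfold be in *. lra. }
  set (g' := csqrt Q').
  assert (Hg' : Cmult g' g' = Q') by (apply csqrt_sq; exact Hb').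
  assert (Ha' : 0 <= fst g') by apply csqrt_re_ge0.
  assert (Hsum : al <= Cmod (Cplus g' g)).
  { pose proof (Cmod_fst_le (Cplus g' g)). assert (E : fst (Cplus g' g) = fst g' + fst g) by reflexivity. rewrite E in H. unfold al. lra. }
  assert (Hdiff : Cmod (Cminus g' g) * Cmod (Cplus g' g) = Cmod (Cminus Q' Q)).
  { rewrite <- Cmod_mult. f_equal. rewrite <- Hg', <- Hg. ring. }
  assert (Hdiffb : Cmod (Cminus g' g) * al <= M * n).
  { pose proof (Cmod_ge_0 (Cminus g' g)).
    apply Rle_trans with (Cmod (Cminus g' g) * Cmod (Cplus g' g)); [|lra].
    apply Rmult_le_compat_l; lra. }
  set (L := Cplus (Cmult u h1) (Cmult v h2)).
  set (e := Cplus (Cminus g' g) (Cdiv L g)).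
  assert (He : Cmult e (Cmult g (Cplus g' g)) =
               Cminus (Cmult L (Cminus g' g)) (Cmult (Cplus (Cmult h1 h1) (Cmult h2 h2)) g)).
  { transitivity (Cplus (Cmult (Cminus (Cmult g' g') (Cmult g g)) g) (Cmult L (Cplus g' g))).
    { unfold e. field. exact Hg0. }
    rewrite Hg', Hg. unfold Q', Q, Qf, L. cbn [fst snd]. ring. }
  assert (HL : Cmod L <= (Cmod u + Cmod v) * n).
  { unfold L. replace ((Cmod u + Cmod v) * n) with (Cmod u * n + Cmod v * n) by ring.
    apply Cmod_add_le; apply Cmod_mul_le; lra. }
  assert (HN : Cmod e * (al * al) <= K * (al * al) * (n * n)).
  { apply Rle_trans with (Cmod e * (Cmod g * Cmod (Cplus g' g))).
    { apply Rmult_le_compat_l. apply Cmod_ge_0. apply Rmult_le_compat; lra. }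
    rewrite <- !Cmod_mult, He.
    unfold Cminus at 1. eapply Rle_trans. apply Cmod_triangle. rewrite Cmod_opp, !Cmod_mult.
    assert (Cmod (Cplus (Cmult h1 h1) (Cmult h2 h2)) <= n * n + n * n).
    { apply Cmod_add_le; apply Cmod_mul_le; lra. }
    assert (Cmod (Cminus g' g) <= M * n / al).
    { apply Rmult_le_reg_r with al; [lra|]. field_simplify; lra. }
    pose proof (Cmod_ge_0 L). pose proof (Cmod_ge_0 (Cminus g' g)).
    pose proof (Cmod_ge_0 g). pose proof (Cmod_ge_0 u). pose proof (Cmod_ge_0 v).
    replace (K * (al * al) * (n * n)) with ((Cmod u + Cmod v) * n * (M * n / al) + (n * n + n * n) * Cmod g)
      by (unfold K; field; lra).
    apply Rplus_le_compat.
    - apply Rmult_le_compat; auto.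
    - apply Rmult_le_compat_r; auto. }
  assert (Hen : Cmod e <= eps * n).
  { assert (Cmod e <= K * (n * n)).
    { apply Rmult_le_reg_r with (al * al). nra. lra. }
    assert (K * n <= eps).
    { apply Rmult_le_reg_l with (/ K). apply Rinv_0_lt_compat; lra.
      replace (/ K * (K * n)) with n by (field; lra).
      replace (/ K * eps) with (eps / K) by (unfold Rdiv; ring). lra. }
    nra. }
  unfold n2, sub2, add2, symO. cbn [fst snd]. fold Q'. fold g'. fold Q. fold g.
  apply Rmax_lub.
  - replace (Cminus (Cminus (Cmult Ci g') (Cmult Ci g))
              (Cplus (Cmult (Cmult Ci (Copp (Cdiv u g))) h1) (Cmult (Cmult Ci (Copp (Cdiv v g))) h2)))
      with (Cmult Ci e) by (unfold e, L; field; exact Hg0).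
    rewrite Cmod_mult, Cmod_Ci. lra.
  - replace (Cminus (Cminus (Cplus v h2) v) (Cplus (Cmult (RtoC 0) h1) (Cmult (RtoC 1) h2))) with (RtoC 0) by ring.
    rewrite Cmod_0. nra.
Qed.

Lemma pt_eq x : Omega1 x ->
  snd (fst (symO x)) * snd (fst (symO x)) - fst (fst (symO x)) * fst (fst (symO x)) =
    1 - (fst (fst x) * fst (fst x) - snd (fst x) * snd (fst x) + (fst (snd x) * fst (snd x) - snd (snd x) * snd (snd x)))
  /\ fst (fst (symO x)) * snd (fst (symO x)) = fst (fst x) * snd (fst x) + fst (snd x) * snd (snd x).
Proof.
  intros H. pose proof (csqrt_Q x H) as HG.
  unfold symO. cbn [fst snd]. set (g := csqrt (Qf x)) in *.
  destruct x as [[a b] [c d]]. destruct g as [g1 g2].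
  unfold Qf, Cmult, Cminus, Cplus, Copp, RtoC, Ci in *. cbn [fst snd] in *.
  injection HG as E1 E2. split; nra.
Qed.

Lemma pt_bound x : Omega1 x ->
  Cmod (fst x) ^ 2 <= 1 + Cmod (fst (symO x)) ^ 2 + Cmod (snd x) ^ 2.
Proof.
  intros H. pose proof (csqrt_Q x H) as HG.
  unfold symO. cbn [fst snd]. set (g := csqrt (Qf x)) in *.
  destruct x as [u v]. unfold Qf in HG. cbn [fst snd] in *.
  assert (E : Cmult u u = Cminus (Cminus (RtoC 1) (Cmult g g)) (Cmult v v)) by (rewrite HG; ring).
  assert (Cmod u ^ 2 = Cmod (Cmult u u)) by (rewrite Cmod_mult; ring).
  rewrite H0, E. rewrite Cmod_mult, Cmod_Ci.
  unfold Cminus. eapply Rle_trans. apply Cmod_triangle. rewrite Cmod_opp.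
  pose proof (Cmod_triangle (RtoC 1) (Copp (Cmult g g))). rewrite Cmod_opp, Cmod_1 in H1.
  rewrite !Cmod_mult in *. lra.
Qed.

Lemma proper : proper_map Omega1 D1 symO.
Proof.
  split. exact symO_D1.
  intros K HK HKD xs Hxs.
  destruct (HK (fun n => symO (xs n)) (fun n => proj2 (Hxs n))) as [phi1 [ly [Hphi1 [Kly Hcv]]]].
  pose proof (HKD ly Kly) as Dly.
  destruct (Hcv 1 Rlt_0_1) as [N0 HN0].
  set (ps := fun n => phi1 (n + N0)%nat).
  assert (Hps : forall n, (ps n < ps (S n))%nat) by (intros n; unfold ps; apply Hphi1).
  assert (Hcvp : seq_cvg (fun n => symO (xs (ps n))) ly).
  { intros eps He. destruct (Hcv eps He) as [N HN]. exists N. intros n Hn. unfold ps. apply HN. lia. }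
  set (B := 1 + (1 + (Cmod (fst ly) + 1) ^ 2 + (Cmod (snd ly) + 1) ^ 2)).
  assert (HB : forall n, Cmod (fst (xs (ps n))) <= B).
  { intros n. assert (Hn := HN0 (n + N0)%nat ltac:(lia)). fold (ps n) in Hn.
    set (x := xs (ps n)) in *.
    pose proof (pt_bound x (proj1 (Hxs _))) as Hb.
    assert (H1 : Cmod (fst (symO x)) <= Cmod (fst ly) + 1).
    { pose proof (Cmod_triangle (Cminus (fst (symO x)) (fst ly)) (fst ly)).
      replace (Cplus (Cminus (fst (symO x)) (fst ly)) (fst ly)) with (fst (symO x)) in H by ring.
      assert (H0 : Cmod (Cminus (fst (symO x)) (fst ly)) <= n2 (sub2 (symO x) ly)) by exact (n2_fst (sub2 (symO x) ly)).
      lra. }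
    assert (H2 : Cmod (snd x) <= Cmod (snd ly) + 1).
    { pose proof (Cmod_triangle (Cminus (snd (symO x)) (snd ly)) (snd ly)).
      replace (Cplus (Cminus (snd (symO x)) (snd ly)) (snd ly)) with (snd (symO x)) in H by ring.
      assert (H0 : Cmod (Cminus (snd (symO x)) (snd ly)) <= n2 (sub2 (symO x) ly)) by exact (n2_snd (sub2 (symO x) ly)).
      change (snd (symO x)) with (snd x) in H, H0. lra. }
    pose proof (Cmod_ge_0 (fst (symO x))). pose proof (Cmod_ge_0 (snd x)).
    pose proof (Cmod_ge_0 (fst x)).
    assert (Cmod (fst (symO x)) ^ 2 <= (Cmod (fst ly) + 1) ^ 2) by (apply pow_incr; lra).
    assert (Cmod (snd x) ^ 2 <= (Cmod (snd ly) + 1) ^ 2) by (apply pow_incr; lra).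
    unfold B. nra. }
  destruct (bw (fun n => fst (fst (xs (ps n)))) B) as [phi2 [lr [Hphi2 Hlr]]].
  { intros n. eapply Rle_trans. apply re_le_Cmod. apply HB. }
  destruct (bw (fun n => snd (fst (xs (ps (phi2 n))))) B) as [phi3 [li [Hphi3 Hli]]].
  { intros n. eapply Rle_trans. 2: apply (HB (phi2 n)).
    pose proof (Rmax_Cmod (fst (xs (ps (phi2 n))))).
    pose proof (Rmax_r (Rabs (fst (fst (xs (ps (phi2 n)))))) (Rabs (snd (fst (xs (ps (phi2 n))))))). lra. }
  set (psi := fun n => ps (phi2 (phi3 n))).
  assert (H23 : forall n, (phi2 (phi3 n) < phi2 (phi3 (S n)))%nat) by (apply incr_comp; auto).
  assert (Hpsi : forall n, (psi n < psi (S n))%nat).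
  { intros n. unfold psi. apply (incr_comp ps (fun n => phi2 (phi3 n))); auto. }
  destruct (cvg_comp _ _ Hcvp) as [Lp [Lq [Lc Ld]]].
  apply (lim_sub _ _ _ H23) in Lp. apply (lim_sub _ _ _ H23) in Lq.
  apply (lim_sub _ _ _ H23) in Lc. apply (lim_sub _ _ _ H23) in Ld.
  apply (lim_sub _ _ _ Hphi3) in Hlr.
  cbn beta in *. unfold symO in Lc, Ld. cbn [fst snd] in Lc, Ld.
  set (x0 := ((lr, li), snd ly) : C2).
  exists psi, x0. split; [exact Hpsi|]. 
  assert (Hcx : seq_cvg (fun n => xs (psi n)) x0).
  { apply comp_cvg; unfold x0, psi; cbn [fst snd]; assumption. }
  assert (Eq1 : snd (fst ly) * snd (fst ly) - fst (fst ly) * fst (fst ly) =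
      1 - (lr * lr - li * li + (fst (snd ly) * fst (snd ly) - snd (snd ly) * snd (snd ly)))).
  { eapply lim_uniq.
    - intros n. exact (proj1 (pt_eq (xs (psi n)) (proj1 (Hxs _)))).
    - apply is_lim_seq_minus'; apply is_lim_seq_mult'; assumption.
    - apply is_lim_seq_minus'. apply is_lim_seq_const.
      apply is_lim_seq_plus'; apply is_lim_seq_minus'; apply is_lim_seq_mult'; assumption. }
  assert (Eq2 : fst (fst ly) * snd (fst ly) = lr * li + fst (snd ly) * snd (snd ly)).
  { eapply lim_uniq.
    - intros n. exact (proj2 (pt_eq (xs (psi n)) (proj1 (Hxs _)))).
    - apply is_lim_seq_mult'; assumption.
    - apply is_lim_seq_plus'; apply is_lim_seq_mult'; assumption. }
  set (G := (snd (fst ly), - fst (fst ly)) : C).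
  assert (HGG : Cmult G G = Qf x0).
  { unfold G, x0, Qf, Cmult, Cminus, Cplus, Copp, RtoC. cbn [fst snd].
    apply injective_projections; cbn [fst snd]; nra. }
  assert (HGpos : 0 < fst G) by (unfold G; cbn [fst]; apply D1_im; exact Dly).
  assert (Hs : csqrt (Qf x0) = G) by (apply csqrt_unique; auto).
  assert (Ey : symO x0 = ly).
  { unfold symO. rewrite Hs. unfold x0, G. destruct ly as [[p q] l2]. cbn [fst snd].
    unfold Cmult, Ci. cbn [fst snd]. f_equal. f_equal; ring. }
  split; [| exact Hcx].
  split.
  - apply (proj2 (Omega1_eqv x0 G HGG)).
    rewrite <- Ey in Dly. unfold symO in Dly. rewrite Hs in Dly. destruct Dly as [D _].
    cbn [fst snd] in D. exact D.
  - rewrite Ey. exact Kly.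
Qed.

Theorem theorem4p7 :
  exists symO : C2 -> C2,
    holomorphic_on Omega1 symO /\
    proper_map Omega1 D1 symO /\
    (forall z w : C, Disc z -> Disc w -> symO (Hmap (z, w)) = Fmap (symm (z, w))).
Proof.
  exists symO. split; [exact holo | split; [exact proper | exact eq_part]].
Qed.
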